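(* Let $p,q\in\mathbf{R}_+^n$, $K_0\in\mathbf{R}_+$, $w\in\mathbf{R}_{++}^n$ and $K=(K_1,\dots,K_n)$ with $K_i\in\mathbf{R}_+$, such that $0\le p_i<q_i\le p_i+K_i$ for $i=1,\dots,n$. Consider the problem \[ \begin{array}{ll} \mbox{minimize} & \mathbf{E}_{\pi}(w^{T}x-K_0)_+ \\ \mbox{subject to} & \mathbf{E}_{\pi}(x_i)=q_i,\\ & \mathbf{E}_{\pi}(x_i-K_i)_+=p_i,\quad i=1,\dots,n, \end{array} \] over all probability measures $\pi$ supported on $\mathbf{R}_+^n$. Then the optimal value of this problem is bounded below by the optimal value $d^{\inf}$ of the program \[ \begin{array}{lll} d^{\inf}= & \displaystyle\sup_{\lambda,\mu,h,\alpha_0,\dots,\alpha_n} & \lambda^{T}p+\mu^{T}(q-K)+h \\ & \text{subject to} & \lambda+\mu\le w, \\ & & h\le \alpha_0(w^{T}K-K_0)-(\alpha_0w-\mu)_+^{T}K,\quad 0\le\alpha_0\le 1, \\ & & h\le \alpha_i(w^{T}K-K_0)-\sum_{j\ne i}(\alpha_iw_j-\mu_j)_+K_j,\quad i=1,\dots,n,\\ & & (\lambda_i+\mu_i)_+/w_i\le\alpha_i\le 1,\quad i=1,\dots,n, \end{array} \] in the variables $\lambda,\mu\in\mathbf{R}^n$, $h\in\mathbf{R}$, $\alpha_0,\dots,\alpha_n\in\mathbf{R}$, which can be written as a linear program of size polynomial (linear) in $n$.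
   Context: $(y)_+=\max(y,0)$, applied componentwise to vectors. $\mathbf{R}_{++}^n$ denotes vectors with strictly positive components. *)

(* Defs.v *)
From HB Require Import structures.
From mathcomp Require Import all_boot all_order all_algebra.
From mathcomp Require Import all_classical all_reals all_analysis.
Set Implicit Arguments. Unset Strict Implicit. Unset Printing Implicit Defensive.
Import Order.TTheory GRing.Theory Num.Theory.
Local Open Scope ring_scope.

Definition pospart (R : realType) (y : R) : R := Num.max y 0.

(* Main.v *)
Require Import Defs.
From HB Require Import structures.
From mathcomp Require Import all_boot all_order all_algebra.
From mathcomp Require Import all_classical all_reals all_analysis.
From mathcomp Require Import measurable_realfun.
From mathcomp Require Import ring lra.
Import Order.TTheory GRing.Theory Num.Theory.
Local Open Scope classical_set_scope.
Local Open Scope ring_scope.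

Section Pointwise.
Variables (R : realType) (n : nat).

Lemma pospart_ge0 (y : R) : 0 <= pospart y.
Proof. by rewrite /pospart le_max lexx orbT. Qed.

Lemma pospart_ge (y : R) : y <= pospart y.
Proof. by rewrite /pospart le_max lexx. Qed.

Lemma pospart_id (y : R) : 0 <= y -> pospart y = y.
Proof. by move=> y0; rewrite /pospart max_l. Qed.

Lemma pospart_0 (y : R) : y <= 0 -> pospart y = 0.
Proof. by move=> y0; rewrite /pospart max_r. Qed.

Lemma alpha_le (y al : R) : 0 <= al <= 1 -> al * y <= pospart y.
Proof.
case/andP=> a0 a1; have [y0|y0] := leP 0 y.
  rewrite pospart_id //; have : 0 <= (1 - al) * y by apply: mulr_ge0; lra.
  rewrite mulrBl mul1r; lra.
rewrite pospart_0 ?(ltW y0) //; have : 0 <= al * (- y) by apply: mulr_ge0; lra.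
rewrite mulrN; lra.
Qed.

Lemma T1 (l m al w K x : R) : 0 <= x -> x <= K ->
  l * pospart (x - K) + m * (x - K) - al * w * (x - K) <= pospart (al * w - m) * K.
Proof.
move=> x0 xK; rewrite (@pospart_0 (x - K)) ?subr_le0 // mulr0 add0r.
have [c0|c0] := leP 0 (al * w - m).
  by rewrite pospart_id //; nra.
rewrite pospart_0 ?(ltW c0) //; nra.
Qed.

Lemma T2 (l m al w K x : R) : K < x -> l + m <= al * w ->
  l * pospart (x - K) + m * (x - K) - al * w * (x - K) <= 0.
Proof.
move=> xK h; rewrite pospart_id ?subr_ge0 ?(ltW xK) //; nra.
Qed.

Variables (lam mu a w K : 'I_n -> R) (h a0 K0 : R).
Hypothesis hw : forall i, 0 < w i.
Hypothesis hK : forall i, 0 <= K i.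
Hypothesis hlm : forall i, lam i + mu i <= w i.
Hypothesis ha0h : h <= a0 * (\sum_(j < n) w j * K j - K0) - \sum_(j < n) pospart (a0 * w j - mu j) * K j.
Hypothesis ha0 : 0 <= a0 <= 1.
Hypothesis hai : forall i, h <= a i * (\sum_(j < n) w j * K j - K0)
                          - \sum_(j < n | j != i) pospart (a i * w j - mu j) * K j.
Hypothesis ha : forall i, pospart (lam i + mu i) / w i <= a i <= 1.

Let term (al : R) (x : 'I_n -> R) j :=
  lam j * pospart (x j - K j) + mu j * (x j - K j) - al * w j * (x j - K j).

Lemma sum_term al x :
  \sum_(i < n) lam i * pospart (x i - K i) + \sum_(i < n) mu i * (x i - K i) + h
  = \sum_j term al x j + al * (\sum_(i < n) w i * x i - K0)
    - al * (\sum_(j < n) w j * K j - K0) + h.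
Proof.
rewrite /term !big_split /= sumrN.
have e : \sum_(i < n) al * w i * (x i - K i) = al * (\sum_(i < n) w i * x i - \sum_(j < n) w j * K j).
  by rewrite -sumrB mulr_sumr; apply: eq_bigr => i _; ring.
rewrite e; ring.
Qed.

Lemma hai_rng i : lam i + mu i <= a i * w i /\ 0 <= a i.
Proof.
have /andP[h1 _] := ha i.
have wi := hw i.
rewrite ler_pdivrMr // in h1.
split; first exact: le_trans (pospart_ge _) h1.
have := pospart_ge0 (lam i + mu i).
move=> p0; have : 0 <= a i * w i by exact: le_trans p0 h1.
rewrite pmulr_lge0 //.
Qed.

Lemma pointwise (x : 'I_n -> R) : (forall i, 0 <= x i) ->
  \sum_(i < n) lam i * pospart (x i - K i) + \sum_(i < n) mu i * (x i - K i) + h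
  <= pospart (\sum_(i < n) w i * x i - K0).
Proof.
move=> hx.
have [[i0 Pi0]|none] := pselect (exists i, K i < x i); last first.
  rewrite (sum_term a0).
  have st : \sum_j term a0 x j <= \sum_(j < n) pospart (a0 * w j - mu j) * K j.
    apply: ler_sum => j _; rewrite /term; apply: T1 => //.
    by rewrite leNgt; apply/negP => c; apply: none; exists j.
  have := (@alpha_le (\sum_(i < n) w i * x i - K0) _ ha0).
  move: ha0h st; lra.
pose i := [arg max_(i > i0 | K i < x i) a i]%O.
have [k Pk kmax] : exists2 k, K k < x k & forall j, K j < x j -> a j <= a k.
  rewrite /i; case: (arg_maxP a (P := fun i => K i < x i) Pi0) => k Pk km.
  by exists k.
rewrite (sum_term (a k)).
have [ak1 ak0] := hai_rng k.
have st : \sum_j term (a k) x j <= \sum_(j < n | j != k) pospart (a k * w j - mu j) * K j.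
  rewrite (bigD1 k) //=.
  have t0 : term (a k) x k <= 0 by apply: T2 => //; rewrite mulrC.
  rewrite -[leRHS]add0r; apply: lerD => //.
  apply: ler_sum => j _; rewrite /term.
  have [xj|xj] := leP (x j) (K j); first exact: T1.
  apply: le_trans (@T2 (lam j) (mu j) (a k) (w j) (K j) (x j) xj _) _.
    have [h1 _] := hai_rng j.
    apply: le_trans h1 _; apply: ler_wpM2r; first exact: ltW.
    exact: kmax.
  by apply: mulr_ge0 => //; apply: pospart_ge0.
have H3 : 0 <= a k <= 1 by rewrite ak0 (andP (ha k)).2.
have := (@alpha_le (\sum_(i < n) w i * x i - K0) _ H3).
have := hai k.
lra.
Qed.

End Pointwise.
Section Meas.
Variables (R : realType) (n : nat).
Variable (pi : probability (n.-tuple R) R).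

Let S := [set x : n.-tuple R | forall i, 0 <= tnth x i].
Hypothesis piS : pi S = 1%E.

Lemma mX i : measurable_fun setT (fun x : n.-tuple R => tnth x i).
Proof. exact: measurable_tnth. Qed.

Lemma mS : measurable S.
Proof.
have -> : S = \bigcap_(i in [set: 'I_n]) ((fun x : n.-tuple R => tnth x i) @^-1` `[0, +oo[%classic).
  apply/seteqP; split => x /=.
    by move=> H i _ /=; rewrite in_itv /= andbT H.
  by move=> H i; have := H i I; rewrite /= in_itv /= andbT.
apply: fin_bigcap_measurable; first exact: finite_finset.
move=> i _; rewrite -[X in measurable X]setTI; apply: mX => //.
Qed.

Lemma piN0 : pi (~` S) = 0%E.
Proof. rewrite probability_setC; last exact: mS. by rewrite piS subee. Qed.

Lemma intS (F : n.-tuple R -> \bar R) : measurable_fun setT F ->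
  (\int[pi]_x F x = \int[pi]_(x in S) F x)%E.
Proof.
move=> mF; rewrite integralE [RHS]integralE.
have mN : measurable (~` S) by apply: measurableC; exact: mS.
rewrite (ge0_negligible_integral _ _ _ _ piN0) //; last first.
  exact: measurable_funepos.
rewrite [X in (_ - X)%E](ge0_negligible_integral _ _ _ _ piN0) //; last first.
  exact: measurable_funeneg.
by rewrite setTD setCK.
Qed.


Lemma mpos (F : n.-tuple R -> R) : measurable_fun setT F ->
  measurable_fun setT (fun x => pospart (F x)).
Proof. by move=> mF; apply: measurable_maxr => //; exact: measurable_cst. Qed.

Lemma integrable_fin (F : n.-tuple R -> R) (r : R) : measurable_fun setT F ->
  (forall x, S x -> 0 <= F x) -> (\int[pi]_x (F x)%:E = r%:E)%E ->
  pi.-integrable setT (EFin \o F).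
Proof.
move=> mF F0 hF; apply/integrableP; split; first exact/measurable_EFinP.
rewrite intS; last first.
  by apply: measurableT_comp => //; exact/measurable_EFinP.
rewrite (eq_integral (fun x => (F x)%:E)); last first.
  by move=> x /set_mem Sx /=; rewrite ger0_norm // F0.
by rewrite -intS ?hF ?ltry //; exact/measurable_EFinP.
Qed.

End Meas.

Section Weak.
Variables (R : realType) (n : nat).
Variables (p q K w : 'I_n -> R) (K0 : R).
Variables (lam mu a : 'I_n -> R) (h a0 : R).
Hypothesis hw : forall i, 0 < w i.
Hypothesis hK : forall i, 0 <= K i.
Hypothesis ha0h : h <= a0 * (\sum_(j < n) w j * K j - K0) - \sum_(j < n) pospart (a0 * w j - mu j) * K j.
Hypothesis ha0 : 0 <= a0 <= 1.
Hypothesis hai : forall i, h <= a i * (\sum_(j < n) w j * K j - K0)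
                          - \sum_(j < n | j != i) pospart (a i * w j - mu j) * K j.
Hypothesis ha : forall i, pospart (lam i + mu i) / w i <= a i <= 1.
Variable pi : probability (n.-tuple R) R.
Hypothesis piS : pi [set x : n.-tuple R | forall i, 0 <= tnth x i] = 1%E.
Hypothesis hX : forall i, (\int[pi]_x (tnth x i)%:E)%E = (q i)%:E.
Hypothesis hP : forall i, (\int[pi]_x (pospart (tnth x i - K i))%:E)%E = (p i)%:E.

Lemma weak :
  ((\sum_(i < n) lam i * p i + \sum_(i < n) mu i * (q i - K i) + h)%:E <=
   \int[pi]_x (pospart (\sum_(i < n) w i * tnth x i - K0))%:E)%E.
Proof.
pose S := [set x : n.-tuple R | forall i, 0 <= tnth x i].
have mS' : measurable S := @mS R n.
pose g := fun x : n.-tuple R => pospart (\sum_(i < n) w i * tnth x i - K0).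
have mg : measurable_fun setT g.
  apply: mpos; apply: measurable_funB; last exact: measurable_cst.
  apply: measurable_sum => i; apply: measurable_funM; first exact: measurable_cst.
  exact: (@mX R n i).
have mgE : measurable_fun setT (EFin \o g) by exact/measurable_EFinP.
have g0 : (0 <= \int[pi]_x (g x)%:E)%E.
  by apply: integral_ge0 => x _; rewrite lee_fin pospart_ge0.
have [->|gfin] := eqVneq (\int[pi]_x (g x)%:E)%E +oo%E; first exact: leey.
have ig : pi.-integrable setT (EFin \o g).
  apply/integrableP; split => //.
  under eq_integral do rewrite /= ger0_norm ?pospart_ge0 //.
  by rewrite ltey.
pose Pf i := fun x : n.-tuple R => pospart (tnth x i - K i).
have mPf i : measurable_fun setT (Pf i).
  by apply: mpos; apply: measurable_funB; [exact: mX | exact: measurable_cst].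
have iX i : pi.-integrable setT (EFin \o (fun x : n.-tuple R => tnth x i)).
  by apply: (@integrable_fin R n pi piS _ (q i) (@mX R n i) _ (hX i)) => x Sx; exact: Sx.
have iP i : pi.-integrable setT (EFin \o Pf i).
  by apply: (@integrable_fin R n pi piS _ (p i) (mPf i) _ (hP i)) => x _; exact: pospart_ge0.
pose c := h - \sum_(i < n) mu i * K i.
pose f := fun x : n.-tuple R => \sum_(i < n) (lam i * Pf i x + mu i * tnth x i) + c.
have fE : forall x : n.-tuple R, ((f x)%:E = \sum_(i < n) ((lam i)%:E * (Pf i x)%:E + (mu i)%:E * (tnth x i)%:E) + c%:E)%E.
  move=> x; rewrite /f EFinD -sumEFin; congr (_ + _)%E => //.
have isum : pi.-integrable setT (fun x => \sum_(i < n) ((lam i)%:E * (Pf i x)%:E + (mu i)%:E * (tnth x i)%:E))%E.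
  apply: (integrable_sum measurableT) => i _; apply: (integrableD measurableT).
    exact: (integrableZl measurableT _ (iP i)).
  exact: (integrableZl measurableT _ (iX i)).
have icst : pi.-integrable setT (fun x : n.-tuple R => c%:E).
  exact: (finite_measure_integrable_cst _ _ measurableT).
have ifn : pi.-integrable setT (EFin \o f).
  rewrite (_ : EFin \o f = (fun x => \sum_(i < n) ((lam i)%:E * (Pf i x)%:E + (mu i)%:E * (tnth x i)%:E) + c%:E)%E); last first.
    by apply/funext => x; rewrite /= fE.
  exact: (integrableD measurableT).
have intf : (\int[pi]_x (f x)%:E = (\sum_(i < n) (lam i * p i + mu i * q i) + c)%:E)%E.
  under eq_integral => x _ do rewrite fE.
  rewrite (integralD measurableT) //.
  rewrite (integral_sum measurableT) //; last first.
    move=> i; apply: (integrableD measurableT).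
      exact: (integrableZl measurableT _ (iP i)).
    exact: (integrableZl measurableT _ (iX i)).
  rewrite (_ : (\int[pi]_x c%:E)%E = c%:E); last first.
    rewrite integral_cst //.
    by rewrite -[RHS]mule1; congr (_ * _)%E; exact: probability_setT.
  rewrite (eq_bigr (fun k => (lam k * p k + mu k * q k)%:E)); last first.
    move=> i _.
    rewrite (integralD measurableT); first last.
      exact: (integrableZl measurableT _ (iX i)).
      exact: (integrableZl measurableT _ (iP i)).
    rewrite (integralZl measurableT); last exact: iP.
    rewrite (integralZl measurableT); last exact: iX.
    by rewrite hP hX EFinD !EFinM.
  by rewrite sumEFin -EFinD.
have -> : \sum_(i < n) lam i * p i + \sum_(i < n) mu i * (q i - K i) + h
        = \sum_(i < n) (lam i * p i + mu i * q i) + c.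
  rewrite /c big_split /=.
  have -> : \sum_(i < n) mu i * (q i - K i) = \sum_(i < n) mu i * q i - \sum_(i < n) mu i * K i.
    by rewrite -sumrB; apply: eq_bigr => i _; ring.
  ring.
rewrite -intf (@intS R n pi piS); last exact: (measurable_int _ ifn).
rewrite (@intS R n pi piS (fun x => (g x)%:E)) //.
apply: (le_integral mS').
- exact: (integrableS measurableT mS' (@subsetT _ _) ifn).
- exact: (integrableS measurableT mS' (@subsetT _ _) ig).
move=> x /set_mem Sx; rewrite lee_fin.
have := @pointwise R n lam mu a w K h a0 K0 hw hK ha0h ha0 hai ha (fun i => tnth x i) Sx.
suff -> : f x = \sum_(i < n) lam i * pospart (tnth x i - K i) + \sum_(i < n) mu i * (tnth x i - K i) + h by [].
rewrite /f /c /Pf big_split /=.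
have -> : \sum_(i < n) mu i * (tnth x i - K i) = \sum_(i < n) mu i * tnth x i - \sum_(i < n) mu i * K i.
  by rewrite -sumrB; apply: eq_bigr => i _; ring.
ring.
Qed.

End Weak.

Theorem proposition5 (R : realType) (n : nat)
  (p q K w : 'I_n -> R) (K0 : R)
  (hp : forall i, 0 <= p i) (hq : forall i, 0 <= q i)
  (hK : forall i, 0 <= K i) (hw : forall i, 0 < w i) (hK0 : 0 <= K0)
  (hpq : forall i, p i < q i) (hqK : forall i, q i <= p i + K i) :
  let wK := \sum_(j < n) w j * K j in
  let dinf := ereal_sup
     [set z | exists (lam mu a : 'I_n -> R) (h a0 : R),
        [/\ (forall i, lam i + mu i <= w i),
            h <= a0 * (wK - K0) - \sum_(j < n) pospart (a0 * w j - mu j) * K j,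
            0 <= a0 <= 1,
            (forall i, h <= a i * (wK - K0)
                          - \sum_(j < n | j != i) pospart (a i * w j - mu j) * K j) &
            (forall i, pospart (lam i + mu i) / w i <= a i <= 1)] /\
        z = (\sum_(i < n) lam i * p i + \sum_(i < n) mu i * (q i - K i) + h)%:E] in
  let primal_value := ereal_inf
     [set z | exists pi : probability (n.-tuple R) R,
        [/\ pi [set x : n.-tuple R | forall i, 0 <= tnth x i] = 1%E,
            (forall i, (\int[pi]_x (tnth x i)%:E)%E = (q i)%:E) &
            (forall i, (\int[pi]_x (pospart (tnth x i - K i))%:E)%E = (p i)%:E)] /\
        z = (\int[pi]_x (pospart (\sum_(i < n) w i * tnth x i - K0))%:E)%E] in
  (dinf <= primal_value)%E.
Proof.
cbv zeta.
apply: ge_ereal_sup => _ [lam [mu [a [h [a0 [[hlm ha0h ha0 hai ha] ->]]]]]].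
apply: le_ereal_inf_tmp => _ [pi [[piS hX hP] ->]].
exact: (@weak R n p q K w K0 lam mu a h a0 hw hK ha0h ha0 hai ha pi piS hX hP).
Qed.
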